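(* Let $G=(V,A)$ be a finite simple graph without loops and without isolated vertices and $\mathfrak n=\mathfrak n(G)$ its graph algebra, with center $\mathfrak z$. Then $(\Lambda^2\mathfrak n)^{\mathfrak n}=\Lambda^2\mathfrak z$ if and only if $|e|\ge 2$ for all $e\in V$.
   Context: Vertices $V=\{e_1,\dots,e_n\}$ are ordered; each edge joining $e_i,e_j$ ($i<j$) is oriented from $e_i$ to $e_j$. $\mathfrak n(G)$ (over a field of characteristic zero) has basis $V\cup A$, $[e_i,e_j]=\alpha$ if $\alpha$ goes from $e_i$ to $e_j$, $[e_i,e_j]=0$ if not adjacent, edges central; $\mathfrak z=\mathrm{span}(A)$. $|e|$ is the degree of $e$. $(\Lambda^2\mathfrak n)^{\mathfrak n}$ is the space of $\omega\in\Lambda^2\mathfrak n$ with $\mathrm{ad}_x\omega=0$ for all $x$, where $\mathrm{ad}_x(a\wedge b)=[x,a]\wedge b+a\wedge[x,b]$. *)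

(* Defs.v *)
From HB Require Import structures.
From mathcomp Require Import all_boot all_order all_algebra.
Set Implicit Arguments. Unset Strict Implicit. Unset Printing Implicit Defensive.
Import GRing.Theory.
Local Open Scope ring_scope.

(* Vertices are 'I_n (ordered by the natural order); the graph is given by a
   symmetric irreflexive relation adj.  An edge joining e_i, e_j with i < j
   is represented by the pair (i, j), oriented from e_i to e_j. *)
Definition edge_pred (n : nat) (adj : rel 'I_n) (p : 'I_n * 'I_n) : bool :=
  ((p.1 < p.2)%N && adj p.1 p.2).

Definition edgeT (n : nat) (adj : rel 'I_n) := {p : 'I_n * 'I_n | edge_pred adj p}.

(* Index type of the basis V ∪ A of n(G). *)
Definition Bas (n : nat) (adj : rel 'I_n) := ('I_n + edgeT adj)%type.

Section GraphAlgebra.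
Variables (K : fieldType) (n : nat) (adj : rel 'I_n).
Local Notation B := (Bas adj).

(* Elements of n(G) are coordinate vectors B -> K. *)
Definition delta (b : B) : B -> K := fun s => if s == b then 1 else 0.

(* Coordinates of the bracket of two basis elements:
   [e_i, e_j] = alpha if alpha goes from e_i to e_j, = -alpha if alpha goes
   from e_j to e_i, 0 otherwise; edges are central. *)
Definition brb (b c : B) : B -> K :=
  match b, c with
  | inl i, inl j => fun r =>
      match r with
      | inr a => if val a == (i, j) then 1 else if val a == (j, i) then -1 else 0
      | inl _ => 0
      end
  | _, _ => fun _ => 0
  end.

Definition bracket (x y : B -> K) : B -> K :=
  fun r => \sum_(b : B) \sum_(c : B) x b * y c * brb b c r.

(* Lambda^2 n(G) is identified with skew-symmetric coefficient arrays
   W : B -> B -> K, a /\ b corresponding to (p,q) |-> a_p b_q - b_p a_q. *)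
Definition skew_arr (W : B -> B -> K) : Prop := forall p q, W p q = - W q p.

(* ad_x (a /\ b) = [x,a] /\ b + a /\ [x,b], in coordinates. *)
Definition adW (x : B -> K) (W : B -> B -> K) : B -> B -> K :=
  fun p q => \sum_(r : B) bracket x (delta r) p * W r q
           + \sum_(r : B) bracket x (delta r) q * W p r.

Definition n_invariant (W : B -> B -> K) : Prop :=
  forall (x : B -> K) (p q : B), adW x W p q = 0.

Definition is_edge (b : B) : bool := if b is inr _ then true else false.

(* omega is in Lambda^2 z, z = span A *)
Definition in_wedge2_center (W : B -> B -> K) : Prop :=
  forall p q : B, ~~ (is_edge p && is_edge q) -> W p q = 0.

End GraphAlgebra.

(* Main.v *)
Require Import Defs.
From HB Require Import structures.
From mathcomp Require Import all_boot all_order all_algebra.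
From mathcomp Require Import ring.
Import GRing.Theory.
Local Open Scope ring_scope.
Set Implicit Arguments. Unset Strict Implicit. Unset Printing Implicit Defensive.

Section H.
Variables (K : fieldType) (n : nat) (adj : rel 'I_n).
Local Notation B := (Bas adj).

Definition S (k : 'I_n) (p : B) (g : B -> K) : K :=
  \sum_(r : B) brb K (inl k) r p * g r.

Lemma bracket_delta (b c : B) p : bracket (delta K b) (delta K c) p = brb K b c p.
Proof.
rewrite /bracket (bigD1 b) //= [X in _ + X]big1 => [|b' nb]; last first.
  by rewrite big1 // => c' _; rewrite /delta (negbTE nb) !mul0r.
rewrite addr0 (bigD1 c) //= [X in _ + X]big1 => [|c' nc]; last first.
  by rewrite /delta (negbTE nc) mulr0 mul0r.
rewrite /delta.
have e : forall z : B, (z == z) = true by move=> z; apply/eqP.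
by rewrite !e addr0 !mul1r.
Qed.

Lemma adW_delta k (W : B -> B -> K) p q :
  adW (delta K (inl k)) W p q = S k p (fun r => W r q) + S k q (fun r => W p r).
Proof.
by rewrite /adW /S; congr (_ + _); apply: eq_bigr => r _; rewrite bracket_delta.
Qed.

Lemma S_vert k j g : S k (inl j) g = 0.
Proof. by rewrite /S big1 // => [[r|r]] _; rewrite mul0r. Qed.

Lemma S_inl k (a : edgeT adj) g :
  S k (inr a) g = \sum_(j : 'I_n)
     (if val a == (k, j) then 1 else if val a == (j, k) then -1 else 0) * g (inl j).
Proof.
rewrite /S big_sumType /= [X in _ + X]big1 ?addr0 // => r _; by rewrite mul0r.
Qed.

Definition sg (x y : 'I_n) : K := if (x < y)%N then 1 else -1.
Definition ordp (x y : 'I_n) := if (x < y)%N then (x, y) else (y, x).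

Lemma S_edge k i (a : edgeT adj) g : k != i -> val a = ordp k i ->
  S k (inr a) g = sg k i * g (inl i).
Proof.
move=> nki ha; rewrite S_inl (bigD1 i) //= big1 ?addr0 => [|j nji].
  rewrite ha /ordp /sg; case ki: (k < i)%N.
    by rewrite eqxx.
  rewrite xpair_eqE [i == k]eq_sym (negbTE nki) /= eqxx. by [].
have ha2 : sval a = ordp k i by exact: ha.
rewrite ha2 /ordp; case ki: (k < i)%N;
  rewrite !xpair_eqE; do ![case: eqP => //= ?]; subst; rewrite ?mul0r //;
  by rewrite ?eqxx ?ltnn in ki nki nji *.
Qed.

Lemma S_out k (a : edgeT adj) g : (val a).1 != k -> (val a).2 != k ->
  S k (inr a) g = 0.
Proof.
move=> h1 h2; rewrite S_inl big1 // => j _.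
case: (val a) h1 h2 => u v /= h1 h2.
rewrite !xpair_eqE; do ![case: eqP => //= ?]; subst; rewrite ?mul0r //;
  by rewrite ?eqxx in h1 h2.
Qed.


Lemma sg2 x y : sg x y * sg x y = 1.
Proof. by rewrite /sg; case: ifP; rewrite ?mulr1 ?mulrNN ?mulr1. Qed.

Lemma sgC x y : x != y -> sg y x = - sg x y.
Proof.
move=> nxy; rewrite /sg; case: (ltngtP x y) => h.
- by [].
- by rewrite opprK.
- by move: nxy; rewrite (val_inj h) eqxx.
Qed.

Lemma ordpC x y : ordp x y = ordp y x.
Proof.
rewrite /ordp; case: (ltngtP x y) => h //.
by rewrite (val_inj h).
Qed.

Lemma tri (R : comRingType) (a b c T Y Z : R) : a * a = 1 -> b * b = 1 -> c * c = 1 ->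
  a * T - b * Y = 0 -> c * T + b * Z = 0 -> a * Z - c * Y = 0 -> T + T = 0.
Proof.
move=> ha hb hc /eqP; rewrite subr_eq0 => /eqP e1 /eqP; rewrite addr_eq0 => /eqP e2
  /eqP; rewrite subr_eq0 => /eqP e3.
have f1 : T = a * (b * Y) by rewrite -e1 mulrA ha mul1r.
have f2 : Y = c * (a * Z) by rewrite e3 mulrA hc mul1r.
have f3 : Z = - (b * (c * T)) by rewrite e2 mulrN opprK mulrA hb mul1r.
rewrite {2}f1 f2 f3.
have -> : a * (b * (c * (a * - (b * (c * T))))) = - ((a * a) * (b * b) * (c * c) * T) by ring.
by rewrite ha hb hc !mul1r subrr.
Qed.

Hypothesis hsym : symmetric adj.
Hypothesis hirr : irreflexive adj.

Lemma adj_neq x y : adj x y -> x != y.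
Proof. by apply: contraTneq => ->; rewrite hirr. Qed.

Lemma edge_ex x y : adj x y -> exists a : edgeT adj, val a = ordp x y.
Proof.
move=> hxy; rewrite /ordp; case: (ltngtP x y) => h.
- by exists (exist _ (x, y) (introT andP (conj h hxy))).
- have hyx : adj y x by rewrite hsym.
  by exists (exist _ (y, x) (introT andP (conj h hyx))).
- by move: (adj_neq hxy); rewrite (val_inj h) eqxx.
Qed.

Lemma edge_val (b : edgeT adj) : (val b).1 != (val b).2 /\ val b = ordp (val b).1 (val b).2
   /\ adj (val b).1 (val b).2.
Proof.
case: b => [[u v]] /= /andP [h1 h2]; split; first by rewrite neq_ltn h1.
by rewrite /ordp h1.
Qed.

Variable W : B -> B -> K.
Hypothesis hskew : skew_arr W.
Hypothesis hinv : n_invariant W.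

Lemma inv_eq k p q : S k p (fun r => W r q) + S k q (fun r => W p r) = 0.
Proof. by rewrite -adW_delta hinv. Qed.

Lemma sg_cancel x y (t : K) : sg x y * t = 0 -> t = 0.
Proof. by move=> h; rewrite -[t]mul1r -(sg2 x y) -mulrA h mulr0. Qed.

Lemma Nb i k (a b : edgeT adj) : adj k i -> val a = ordp k i ->
  (val b).1 != k -> (val b).2 != k -> W (inl i) (inr b) = 0.
Proof.
move=> hki ha h1 h2; have := inv_eq k (inr a) (inr b).
rewrite (S_edge _ (adj_neq hki) ha) (S_out _ h1 h2) addr0.
exact: sg_cancel.
Qed.


Hypothesis hK : [pchar K] =i pred0.
Hypothesis hdeg : forall i, (2 <= #|[set j | adj i j]|)%N.
Hypothesis hnoiso : forall i : 'I_n, exists j : 'I_n, adj i j.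

Lemma two0 (t : K) : t + t = 0 -> t = 0.
Proof.
rewrite -mulr2n -mulr_natr => /eqP; rewrite mulf_eq0 => /orP [/eqP //|].
by rewrite ((pcharf0P K).1 hK 2).
Qed.

Lemma Vlem i (b : edgeT adj) : W (inl i) (inr b) = 0.
Proof.
move: (edge_val b); case E: (val b) => [u v] /= [huv [hb huvadj]].
have := hdeg i; move/card_gt1P => [k1 [k2 [hk1 hk2 nk]]].
rewrite inE in hk1; rewrite inE in hk2.
have Hk : forall k, adj i k -> k != u -> k != v -> W (inl i) (inr b) = 0.
  move=> k hik hku hkv; have hki : adj k i by rewrite hsym.
  have [a ha] := edge_ex hki.
  by apply: (Nb hki ha); rewrite E /= eq_sym.
case: (boolP ((k1 != u) && (k1 != v))) => [/andP [h1 h2]|h1]; first exact: (Hk k1).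
case: (boolP ((k2 != u) && (k2 != v))) => [/andP [h3 h4]|h2]; first exact: (Hk k2).
rewrite negb_and !negbK in h1; rewrite negb_and !negbK in h2.
have [hiu hiv] : adj i u /\ adj i v.
  move: h1 h2 nk hk1 hk2; case/orP => /eqP -> ; case/orP => /eqP ->;
  by rewrite ?eqxx // => _ -> ->.
have niu := adj_neq hiu; have niv := adj_neq hiv.
have hui : adj u i by rewrite hsym.
have hvi : adj v i by rewrite hsym.
have [a1 ha1] := edge_ex hui.
have [a2 ha2] := edge_ex hvi.
have hb1 : val b = ordp u v by rewrite E.
have hb2 : val b = ordp v u by rewrite E ordpC.
have ha1' : val a1 = ordp i u by rewrite ha1 ordpC.
have ha2' : val a2 = ordp i v by rewrite ha2 ordpC.
have E1 := inv_eq u (inr a1) (inr b).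
rewrite (S_edge _ _ ha1) ?(eq_sym u) // (S_edge _ huv hb1) in E1.
have E2 := inv_eq v (inr a2) (inr b).
rewrite (S_edge _ _ ha2) ?(eq_sym v) // (S_edge _ _ hb2) ?(eq_sym v) // in E2.
have E3 := inv_eq i (inr a2) (inr a1).
rewrite (S_edge _ niv ha2') (S_edge _ niu ha1') in E3.
rewrite [W (inr a1) (inl v)]hskew mulrN in E1.
rewrite [W (inr a2) (inl u)]hskew (sgC huv) mulrNN in E2.
rewrite [W (inr a2) (inl u)]hskew (@sgC u i) ?(eq_sym u) // (@sgC v i) ?(eq_sym v) // mulrNN mulNr addrC in E3.
apply: two0; exact: (tri (sg2 u i) (sg2 u v) (sg2 v i) E1 E2 E3).
Qed.


Lemma inv_wedge : in_wedge2_center W.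
Proof.
move=> [i|a] [j|b] //= _.
- have [k hik] := hnoiso i.
  have hki : adj k i by rewrite hsym.
  have [a ha] := edge_ex hki.
  have := inv_eq k (inr a) (inl j).
  rewrite (S_edge _ (adj_neq hki) ha) S_vert addr0.
  exact: sg_cancel.
- exact: Vlem.
- by rewrite hskew Vlem oppr0.
Qed.

End H.

Section F.
Variables (K : fieldType) (n : nat) (adj : rel 'I_n).
Local Notation B := (Bas adj).
Hypothesis hsym : symmetric adj.
Hypothesis hirr : irreflexive adj.

Lemma eqB (z : B) : (z == z) = true.
Proof. by apply/eqP. Qed.

Lemma bracket_inr (x : B -> K) (c : edgeT adj) p : bracket x (delta K (inr c)) p = 0.
Proof.
rewrite /bracket big1 // => b _; rewrite big1 // => c' _.
case: c' => [j|e]; first by rewrite /delta /= mulr0 mul0r.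
by case: b => [k|f] /=; rewrite mulr0.
Qed.

Lemma wedge_inv (W : B -> B -> K) : in_wedge2_center W -> n_invariant W.
Proof.
move=> hw x p q; rewrite /adW !big1 ?addr0 // => r _; case: r => [j|c];
  rewrite ?bracket_inr ?mul0r ?hw ?mulr0 //= ?andbF //.
Qed.

Variable i : 'I_n.
Variable j0 : 'I_n.
Hypothesis hj0 : adj i j0.
Hypothesis hdeg : ~~ (2 <= #|[set j | adj i j]|)%N.
Variable al : edgeT adj.
Hypothesis hal : val al = ordp i j0.

Lemma uniqn j : adj i j -> j = j0.
Proof.
move=> hij; apply/eqP; apply: contraNT hdeg => nj; apply/card_gt1P.
by exists j, j0; rewrite !inE hij hj0 nj.
Qed.

Lemma al_uniq (e : edgeT adj) : ((val e).1 == i) || ((val e).2 == i) -> e = al.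
Proof.
move=> h; apply: val_inj; rewrite hal.
have [_ [he hadj]] := edge_val e.
move: h he hadj; case: (val e) => u v /= /orP [/eqP eu | /eqP ev] he hadj.
- subst u; by rewrite (uniqn hadj) in he *.
- subst v; have hiu : adj i u by rewrite hsym.
  by rewrite (uniqn hiu) in he *; rewrite he ordpC.
Qed.

Lemma Br0 (x : B -> K) r : r != inr al -> bracket x (delta K (inl i)) r = 0.
Proof.
move=> hr; rewrite /bracket big1 // => b _; rewrite big1 // => c _.
case: c => [j|e]; last by rewrite /delta /= mulr0 mul0r.
case: (eqVneq j i) => [->|nji]; last first.
  rewrite /delta /=; case: eqP => [[e]|_]; first by rewrite e eqxx in nji.
  by rewrite mulr0 mul0r.
case: b => [k|f] /=; last by rewrite mulr0.
case: r hr => [m|e] hr /=; first by rewrite mulr0.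
have ne : e != al by apply: contraNneq hr => ->.
case: eqP => h1.
  have h1' : val e = (k, i) := h1.
  have ea : e = al by apply: al_uniq; rewrite h1' /= eqxx orbT.
  by rewrite ea eqxx in ne.
case: eqP => h2; last by rewrite mulr0.
have h2' : val e = (i, k) := h2.
have ea : e = al by apply: al_uniq; rewrite h2' /= eqxx.
by rewrite ea eqxx in ne.
Qed.

Definition W0 : B -> B -> K := fun p q =>
  (if (p == inl i) && (q == inr al) then 1 else 0)
  - (if (p == inr al) && (q == inl i) then 1 else 0).

Lemma W0skew : skew_arr W0.
Proof.
move=> p q; rewrite /W0 opprB; congr (_ - _); by rewrite andbC.
Qed.

Lemma W0inv : n_invariant W0.
Proof.
move=> x p q; rewrite /adW (bigD1 (inl i)) //= [X in _ + X + _]big1; last first.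
  move=> r nr; case: (eqVneq r (inr al)) => [->|nra]; first by rewrite bracket_inr mul0r.
  by rewrite /W0 (negbTE nr) (negbTE nra) /= subrr mulr0.
rewrite (bigD1 (inl i)) //= [X in _ + (_ + X)]big1; last first.
  move=> r nr; case: (eqVneq r (inr al)) => [->|nra]; first by rewrite bracket_inr mul0r.
  by rewrite /W0 (negbTE nr) (negbTE nra) /= !andbF subrr mulr0.
rewrite /W0 !eqB /= !andbF !addr0 sub0r subr0.
case: (eqVneq q (inr al)) => [->|nq]; case: (eqVneq p (inr al)) => [->|np] /=;
  rewrite ?(Br0 _ np) ?(Br0 _ nq) ?mulr0 ?mul0r ?mulr1 ?mulrN1 ?oppr0 ?addr0 ?add0r ?subrr //. all: by rewrite ?mulr0 ?addr0 ?add0r.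
Qed.

End F.

Theorem mainTheorem10 (K : fieldType) (hK : [pchar K] =i pred0)
  (n : nat) (adj : rel 'I_n)
  (hsym : symmetric adj) (hirr : irreflexive adj)
  (hnoiso : forall i : 'I_n, exists j : 'I_n, adj i j) :
  (forall W : Bas adj -> Bas adj -> K,
      skew_arr W -> (n_invariant W <-> in_wedge2_center W))
  <-> (forall i : 'I_n, (2 <= #|[set j | adj i j]|)%N).
Proof.
split.
- move=> H i; apply/negPn/negP => hd.
  have [j0 hj0] := hnoiso i.
  have [al hal] := edge_ex hsym hirr hj0.
  have := (H (W0 K i al) (W0skew K i al)).1 (W0inv hsym hj0 hd hal) (inl i) (inr al) isT.
  rewrite /W0 !eqB /=; apply/eqP; rewrite subr0 oner_eq0 //.
- move=> hdeg W hs; split => [hinv|hw].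
  + by move=> p q; apply: (inv_wedge hsym hirr hs hinv hK hdeg hnoiso).
  + exact: wedge_inv.
Qed.
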